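(* Let $X$ be the vertex set of a connected simplicial graph with bounded geometry, equipped with the shortest path metric, which is $\delta$-hyperbolic, and fix $e\in X$ and $p\geq 1$. For $x\in X$, $k\in\mathbb{N}$, $n\in\mathbb{N}\setminus\{0\}$, let $F_{x,k,n}$ be the set of all points of $X\setminus B(e;3\delta)$ lying on $g([n,2n])$ for some geodesic $g$ from some $y$ with $d(x,y)\leq k$ to $e$ (parametrised by arc length starting at $y$), and let $F(x,k,n)\in\ell^p(X)$ be the characteristic function of $F_{x,k,n}$. Then there exists a constant $C$ such that for all $x\in X$, all $n\in\mathbb{N}\setminus\{0\}$ and all $k\leq \frac{n}{4}$, \[ \|F(x,k,n)\|_p^p\leq Cn, \] and if in addition $d(x,e)\geq 2n$, then $n-3\delta\leq \|F(x,k,n)\|_p^p$.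
   Context: Bounded geometry: for every $r$ there is a uniform bound on the cardinality of balls of radius $r$. $\delta$-hyperbolicity in the Rips sense: each side of a geodesic triangle lies in the $\delta$-neighbourhood of the union of the other two. *)

(* Defs.v *)
From HB Require Import structures.
From mathcomp Require Import all_boot all_order all_algebra.
From mathcomp Require Import all_classical all_reals all_analysis.
Set Implicit Arguments. Unset Strict Implicit. Unset Printing Implicit Defensive.
Import Order.TTheory GRing.Theory Num.Theory.
Local Open Scope classical_set_scope.
Local Open Scope ring_scope.

Section Defs.
Context {V : choiceType}.

Definition simplicial_graph (adj : V -> V -> Prop) : Prop :=
  (forall x y, adj x y -> adj y x) /\ (forall x, ~ adj x x).

Inductive walk (adj : V -> V -> Prop) : V -> V -> nat -> Prop :=
| walk0 x : walk adj x x 0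
| walkS x z y n : adj x z -> walk adj z y n -> walk adj x y n.+1.

(* d is the shortest path metric of the graph; this also forces connectedness *)
Definition graph_dist (adj : V -> V -> Prop) (d : V -> V -> nat) : Prop :=
  forall x y, walk adj x y (d x y) /\ (forall m, walk adj x y m -> (d x y <= m)%N).

Definition connected_graph (adj : V -> V -> Prop) : Prop :=
  forall x y, exists m, walk adj x y m.

Definition bounded_geometry (d : V -> V -> nat) : Prop :=
  forall r : nat, exists N : nat, forall (x : V) (s : seq V),
    uniq s -> (forall y, y \in s -> (d x y <= r)%N) -> (size s <= N)%N.

(* geodesic from y to z, parametrised by arc length starting at y,
   defined on the integer times 0 .. d y z *)
Definition geodesic (d : V -> V -> nat) (y z : V) (g : nat -> V) : Prop :=
  g 0%N = y /\ g (d y z) = z /\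
  forall i j, (i <= d y z)%N -> (j <= d y z)%N -> d (g i) (g j) = `|i - j|%N.

Definition rips_hyperbolic {R : realType} (d : V -> V -> nat) (delta : R) : Prop :=
  forall x y z g1 g2 g3, geodesic d x y g1 -> geodesic d y z g2 -> geodesic d z x g3 ->
  forall i, (i <= d x y)%N ->
    exists j, ((j <= d y z)%N /\ ((d (g1 i) (g2 j))%:R <= delta))
           \/ ((j <= d z x)%N /\ ((d (g1 i) (g3 j))%:R <= delta)).

Definition Fset {R : realType} (d : V -> V -> nat) (delta : R) (e x : V) (k n : nat) : set V :=
  [set z | ~ ((d e z)%:R <= 3 * delta) /\
     exists y g t, (d x y <= k)%N /\ geodesic d y e g /\
       (n <= t)%N /\ (t <= 2 * n)%N /\ (t <= d y e)%N /\ z = g t].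

Definition lp_norm_pow {R : realType} (p : R) (f : V -> R) : \bar R :=
  \esum_(z in [set: V]) ((`|f z| `^ p)%:E).

End Defs.

(* Main.v *)
Require Import Defs.
From HB Require Import structures.
From mathcomp Require Import all_boot all_order all_algebra.
From mathcomp Require Import all_classical all_reals all_analysis.
From mathcomp Require Import zify.
Set Implicit Arguments. Unset Strict Implicit.
Import Order.TTheory GRing.Theory Num.Theory.
Local Open Scope classical_set_scope.
Local Open Scope ring_scope.

Lemma walk_cat (V : choiceType) (adj : V -> V -> Prop) x y z m n :
  walk adj x y m -> walk adj y z n -> walk adj x z (m + n).
Proof.
elim=> [a|a b c k Hab Hw IH] H //.
by rewrite addSn; apply: walkS Hab (IH H).
Qed.

Lemma walk_rev (V : choiceType) (adj : V -> V -> Prop) x y m :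
  (forall a b, adj a b -> adj b a) -> walk adj x y m -> walk adj y x m.
Proof.
move=> Hs; elim=> [a|a b c k Hab Hw IH]; first exact: walk0.
rewrite -addn1; apply: walk_cat IH _.
by apply: walkS (Hs _ _ Hab) (walk0 _ _).
Qed.

Lemma walk_inv (V : choiceType) (adj : V -> V -> Prop) x y m :
  walk adj x y m ->
  match m with 0 => x = y | k.+1 => exists w, adj x w /\ walk adj w y k end.
Proof. by case=> // a b c k H1 H2; exists b. Qed.

Lemma d_refl (V : choiceType) (adj : V -> V -> Prop) d x :
  graph_dist adj d -> d x x = 0%N.
Proof. by move=> Hd; apply/eqP; rewrite -leqn0; apply: (Hd x x).2; exact: walk0. Qed.

Lemma d_sym (V : choiceType) (adj : V -> V -> Prop) d x y :
  simplicial_graph adj -> graph_dist adj d -> d x y = d y x.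
Proof.
move=> [Hs _] Hd; apply/eqP; rewrite eqn_leq.
by rewrite (Hd x y).2 ?(Hd y x).2 //; apply: walk_rev => //; [exact: (Hd x y).1|exact: (Hd y x).1].
Qed.

Lemma d_tri (V : choiceType) (adj : V -> V -> Prop) d x y z :
  graph_dist adj d -> (d x z <= d x y + d y z)%N.
Proof. by move=> Hd; apply: (Hd x z).2; apply: walk_cat; [exact: (Hd x y).1|exact: (Hd y z).1]. Qed.

Lemma d_eq0 (V : choiceType) (adj : V -> V -> Prop) d x y :
  graph_dist adj d -> d x y = 0%N -> x = y.
Proof. by move=> Hd E; have := walk_inv (Hd x y).1; rewrite E. Qed.

Lemma d_step (V : choiceType) (adj : V -> V -> Prop) d a z m :
  graph_dist adj d -> d a z = m.+1 -> exists w, (d a w <= 1)%N /\ d w z = m.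
Proof.
move=> Hd E; have := walk_inv (Hd a z).1; rewrite E => -[w [Haw Hw]].
exists w; split.
  by apply: (Hd a w).2; apply: walkS Haw (walk0 _ _).
have h1 := (Hd w z).2 _ Hw.
have h2 : (d a z <= 1 + d w z)%N.
  by apply: (Hd a z).2; apply: walkS Haw (Hd w z).1.
lia.
Qed.

Definition nxt (V : choiceType) (d : V -> V -> nat) (z a : V) : V :=
  xget a [set w | (d a w <= 1)%N /\ d w z = (d a z).-1].

Definition geo (V : choiceType) (d : V -> V -> nat) (y z : V) (i : nat) : V :=
  iter i (nxt d z) y.

Lemma nxtP (V : choiceType) (adj : V -> V -> Prop) d z a :
  graph_dist adj d -> (0 < d a z)%N ->
  (d a (nxt d z a) <= 1)%N /\ d (nxt d z a) z = (d a z).-1.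
Proof.
move=> Hd Hp; rewrite /nxt; case: xgetP => // Hn.
exfalso; case E: (d a z) Hp => [|m] // _.
have [w [h1 h2]] := d_step Hd E; apply: (Hn w); split => //; by rewrite E.
Qed.

Lemma geo_dist (V : choiceType) (adj : V -> V -> Prop) d y z i :
  graph_dist adj d -> (i <= d y z)%N -> d (geo d y z i) z = (d y z - i)%N.
Proof.
move=> Hd; elim: i => [|i IH] Hi; first by rewrite subn0.
rewrite /geo iterS -/(geo d y z i).
have := IH (ltnW Hi) => E.
have Hp : (0 < d (geo d y z i) z)%N by rewrite E; lia.
have [_ ->] := nxtP Hd Hp.
rewrite E; lia.
Qed.

Lemma geo_le (V : choiceType) (adj : V -> V -> Prop) d y z i j :
  graph_dist adj d -> (i <= j)%N -> (j <= d y z)%N ->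
  (d (geo d y z i) (geo d y z j) <= j - i)%N.
Proof.
move=> Hd Hij; elim: j Hij => [|j IH] Hij Hj.
  have -> : i = 0%N by lia.
  by rewrite (d_refl _ Hd).
case: (leqP i j) => Hij'; last first.
  have -> : i = j.+1 by lia.
  by rewrite (d_refl _ Hd).
have E := geo_dist Hd (ltnW Hj).
have Hp : (0 < d (geo d y z j) z)%N by rewrite E; lia.
have [h1 _] := nxtP Hd Hp.
have := d_tri (geo d y z i) (geo d y z j) (geo d y z j.+1) Hd.
have eS : geo d y z j.+1 = nxt d z (geo d y z j) by [].
rewrite eS; have := IH Hij' (ltnW Hj); lia.
Qed.

Lemma geo_geodesic (V : choiceType) (adj : V -> V -> Prop) d y z :
  simplicial_graph adj -> graph_dist adj d -> geodesic d y z (geo d y z).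
Proof.
move=> Hs Hd; split => //; split.
  by apply: (d_eq0 Hd); rewrite (geo_dist Hd) ?subnn.
suff H : forall i j, (i <= j)%N -> (j <= d y z)%N ->
    d (geo d y z i) (geo d y z j) = (j - i)%N.
  move=> i j Hi Hj; case: (leqP i j) => Hij.
    by rewrite H //; lia.
  by rewrite (d_sym _ _ Hs Hd) H //; [lia|lia].
move=> i j Hij Hj.
have h1 := geo_le Hd Hij Hj.
have h2 := d_tri (geo d y z i) (geo d y z j) z Hd.
rewrite !(geo_dist Hd) // in h2; last by lia.
lia.
Qed.
Lemma cover_bound (V : choiceType) (d : V -> V -> nat) (r N : nat) :
  (forall (x : V) (s : seq V), uniq s -> (forall y, y \in s -> (d x y <= r)%N) -> (size s <= N)%N) ->
  forall (L u : seq V), uniq u -> (forall z, z \in u -> has (fun w => d w z <= r)%N L) ->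
  (size u <= N * size L)%N.
Proof.
move=> Hb; elim=> [|w L IH] u Hu Hc.
  by case: u Hu Hc => // a u _ /(_ a); rewrite inE eqxx /= => /(_ isT).
set P := (fun z => d w z <= r)%N.
rewrite -(count_predC P u) /= mulnS.
apply: leq_add.
  rewrite -size_filter; apply: (Hb w); first exact: filter_uniq.
  by move=> y; rewrite mem_filter => /andP[Hy _].
rewrite -size_filter; apply: IH; first exact: filter_uniq.
move=> z; rewrite mem_filter => /andP[/= Hn Hz].
by have := Hc z Hz; rewrite /= -/(P z) (negbTE Hn).
Qed.

Lemma sum1_seq (R : realType) (T : Type) (s : seq T) :
  (\sum_(i <- s) (1%E : \bar R) = (size s)%:R%:E)%E.
Proof.
elim: s => [|a s IH]; first by rewrite big_nil.
by rewrite big_cons IH /= -EFinD -natr1 addrC.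
Qed.

Lemma lp_ind (V : choiceType) (R : realType) (F : set V) (p : R) :
  1 <= p -> lp_norm_pow p (\1_F : V -> R) = \esum_(z in F) (1%E : \bar R).
Proof.
move=> Hp; rewrite /lp_norm_pow [RHS]esum_mkcond; apply: eq_esum => z _.
rewrite indicE; case: (z \in F) => /=.
  by rewrite normr1 powR1.
rewrite normr0 powR0 //; apply/eqP => E; rewrite E in Hp; by move: Hp; rewrite ler10.
Qed.

Lemma esum_ub (V : choiceType) (R : realType) (F : set V) (B : nat) :
  (forall u, uniq u -> (forall z, z \in u -> F z) -> (size u <= B)%N) ->
  (\esum_(z in F) (1%E : \bar R) <= B%:R%:E)%E.
Proof.
move=> H; apply: ge_ereal_sup => _ [X [finX XF] <-].
rewrite fsbig_finite // sum1_seq lee_fin ler_nat; apply: H.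
  exact: finmap.fset_uniq.
by move=> z; rewrite in_fset_set // inE => /XF.
Qed.

Lemma esum_lb (V : choiceType) (R : realType) (F : set V) (u : seq V) :
  uniq u -> (forall z, z \in u -> F z) ->
  ((size u)%:R%:E <= \esum_(z in F) (1%E : \bar R))%E.
Proof.
move=> Hu H; apply: esum_ge; exists [set` u].
  split; first exact: finite_seq.
  by move=> z /= Hz; apply: H.
rewrite fsbig_finite ?finite_seq // sum1_seq lee_fin ler_nat.
apply: uniq_leq_size => // z Hz.
by rewrite in_fset_set ?finite_seq // inE.
Qed.

Theorem lemma3p3 (R : realType) (V : choiceType) (adj : V -> V -> Prop)
  (d : V -> V -> nat) (delta : R) (e : V) (p : R) :
  simplicial_graph adj -> connected_graph adj -> graph_dist adj d ->
  bounded_geometry d -> rips_hyperbolic d delta -> 1 <= p ->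
  exists C : R, forall (x : V) (n k : nat), (0 < n)%N -> (4 * k <= n)%N ->
    (lp_norm_pow p (\1_(Fset d delta e x k n) : V -> R) <= (C * n%:R)%:E)%E /\
    ((2 * n <= d x e)%N ->
       ((n%:R - 3 * delta)%:E <= lp_norm_pow p (\1_(Fset d delta e x k n) : V -> R))%E).
Proof.
move=> Hs Hc Hd Hbg Hr Hp.
have d0 : 0 <= delta.
  have Hge := geo_geodesic e e Hs Hd.
  have [j [[_ Hj]|[_ Hj]]] := Hr e e e _ _ _ Hge Hge Hge 0%N (leq0n _).
    exact: le_trans Hj.
  exact: le_trans Hj.
have [D HD] : exists D : nat, delta <= D%:R.
  by exists (Num.Def.trunc delta).+1; apply: ltW; apply: truncnS_gt.
have [N HN] := Hbg (2 * D)%N.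
exists (N * (D + 5))%:R => x n k Hn Hk.
rewrite lp_ind //; split.
  rewrite -natrM; apply: esum_ub => u Hu HF.
  set M := (3 * n + D)%N.
  set g2 := geo d e x.
  have Hg2 := geo_geodesic e x Hs Hd.
  case: Hg2 => g20 [g2D g2d].
  set L := x :: map g2 (iota (d e x - M) M.+1).
  suff Hcov : forall z, z \in u -> has (fun w => d w z <= 2 * D)%N L.
    have := @cover_bound _ _ _ _ HN L u Hu Hcov => H1.
    apply: leq_trans H1 _; rewrite /L /= size_map size_iota /M; nia.
    move=> z /HF [Hz3 [y [g [t [Hxy [Hg [Hnt [Ht2 [Hte ->]]]]]]]]].
    have Hh := geo_geodesic x y Hs Hd.
    have [j [[Hj Hjd]|[Hj Hjd]]] := Hr y e x g g2 (geo d x y) Hg (geo_geodesic e x Hs Hd) Hh t Hte.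
      have HjD : (d (g t) (g2 j) <= D)%N by rewrite -(ler_nat R); exact: le_trans HD.
      case: Hg => g0 [gD gd].
      have dyz := gd 0%N t (leq0n _) Hte; rewrite g0 in dyz.
      have dwx := g2d j (d e x) Hj (leqnn _); rewrite g2D -/g2 in dwx.
      have t1 := d_tri (g2 j) (g t) x Hd; rewrite (d_sym (g2 j) (g t) Hs Hd) in t1.
      have t2 := d_tri (g t) y x Hd.
      rewrite (d_sym (g t) y Hs Hd) (d_sym y x Hs Hd) in t2.
      rewrite /L; apply/hasP; exists (g2 j).
        rewrite inE; apply/orP; right; apply: map_f; rewrite mem_iota; rewrite /M; lia.
      rewrite (d_sym (g2 j) (g t) Hs Hd); lia.
    have HjD : (d (g t) (geo d x y j) <= D)%N by rewrite -(ler_nat R); exact: le_trans HD.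
    case: Hg => g0 [gD gd].
    have dyz := gd 0%N t (leq0n _) Hte; rewrite g0 in dyz.
    case: Hh => h0 [hD hd].
    have dxw := hd 0%N j (leq0n _) Hj; rewrite h0 in dxw.
    have t1 := d_tri x (geo d x y j) (g t) Hd.
    have t2 := d_tri y x (g t) Hd.
    rewrite (d_sym y x Hs Hd) in t2.
    rewrite (d_sym (g t) (geo d x y j) Hs Hd) in HjD.
    rewrite /L; apply/hasP; exists x; first by rewrite inE eqxx.
    lia.
move=> H2n.
set g := geo d x e.
have [g0 [gD gd]] := geo_geodesic x e Hs Hd.
set K := Num.Def.trunc (3 * delta).
have [HK1 HK2] : K%:R <= 3 * delta /\ 3 * delta < K.+1%:R.
  have /andP[a b] := truncn_itv (mulr_ge0 (ler0n _ 3) d0); by split.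
set u := map g (iota n (n - K)).
have Hu : uniq u.
  rewrite map_inj_in_uniq ?iota_uniq // => i j Hi Hj E.
  rewrite !mem_iota in Hi Hj.
  have Hi' : (i <= d x e)%N by lia.
  have Hj' : (j <= d x e)%N by lia.
  have := gd i j Hi' Hj'; rewrite -/g E (d_refl _ Hd); lia.
suff HF : forall z, z \in u -> Fset d delta e x k n z.
  apply: le_trans (@esum_lb _ R _ u Hu HF).
  rewrite size_map size_iota lee_fin.
  case: (leqP K n) => HKn.
    by rewrite natrB // lerB // ?lexx.
  have -> : (n - K)%N = 0%N by lia.
  rewrite subr_le0; apply: le_trans HK1; apply: ltW; rewrite ltr_nat //.
move=> z /mapP [t Ht ->]; rewrite mem_iota in Ht.
split.
  rewrite (d_sym e (g t) Hs Hd).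
  have Ht' : (t <= d x e)%N by lia.
  have := gd t (d x e) Ht' (leqnn _); rewrite gD => ->.
  move=> Hle.
  have : ((`|t - d x e|)%N%:R : R) < K.+1%:R by exact: le_lt_trans Hle HK2.
  rewrite ltr_nat; lia.
exists x, g, t; split; first by rewrite (d_refl _ Hd).
split; first exact: (geo_geodesic x e Hs Hd).
split; first lia.
split; first lia.
split; first lia.
by [].
Qed.
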